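(* Let $I\subset K[x_1,\ldots,x_n]$ be a monomial ideal which is componentwise polymatroidal with strong exchange property. Then $I$ has linear quotients.
   Context: $G(I)$ = minimal monomial generating set; $\deg_{x_i}(u)$ = exponent of $x_i$ in $u$. A monomial ideal generated in a single degree is polymatroidal if for all $u,v\in G(I)$ and all $i$ with $\deg_{x_i}(u)>\deg_{x_i}(v)$ there exists $j$ with $\deg_{x_j}(u)<\deg_{x_j}(v)$ and $x_j(u/x_i)\in I$. A polymatroidal ideal $I$ satisfies the strong exchange property if for all $u,v\in G(I)$ and all $i,j$ with $\deg_{x_i}(u)>\deg_{x_i}(v)$ and $\deg_{x_j}(u)<\deg_{x_j}(v)$, one has $x_j(u/x_i)\in I$. $I_{\langle j\rangle}$ is the ideal generated by all degree-$j$ monomials in $I$; $I$ is componentwise polymatroidal with strong exchange property if every nonzero $I_{\langle j\rangle}$ is polymatroidal with the strong exchange property. A monomial ideal has linear quotients if there is an ordering $v_1,\ldots,v_r$ of $G(I)$ such that each $(v_1,\ldots,v_{i-1}):v_i$, $i\ge 2$, is generated by a subset of the variables. *)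

(* Defs.v *)
(* Monomial ideals in K[x_1,...,x_n] are treated
   combinatorially: a monomial is its exponent vector, and a monomial
   ideal is determined by the set of monomials it contains. *)
From mathcomp Require Import all_boot.
Set Implicit Arguments. Unset Strict Implicit. Unset Printing Implicit Defensive.

Definition mon (n : nat) := {ffun 'I_n -> nat}.

Definition mdvd n (u v : mon n) : bool := [forall i, u i <= v i].

Definition mmul n (u v : mon n) : mon n := [ffun i => u i + v i].

Definition mdeg n (u : mon n) : nat := \sum_(i < n) u i.

(* x_j (u / x_i)  (used only when x_i divides u) *)
Definition mexch n (u : mon n) (i j : 'I_n) : mon n :=
  [ffun l => (u l - (l == i)) + (l == j)].

(* the monomial ideal generated by the monomials satisfying S:
   its monomials are those divisible by some element of S *)
Definition in_mideal n (S : mon n -> Prop) (u : mon n) : Prop :=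
  exists2 g, S g & mdvd g u.

Definition gens_pred n (gens : seq (mon n)) : mon n -> Prop :=
  fun g => g \in gens.

(* u belongs to G(J), the minimal monomial generating set of J *)
Definition in_mingens n (S : mon n -> Prop) (u : mon n) : Prop :=
  in_mideal S u /\
  (forall w, in_mideal S w -> mdvd w u -> w = u).

(* generators of I_<j>: all degree-j monomials of I *)
Definition comp_gens n (S : mon n -> Prop) (j : nat) : mon n -> Prop :=
  fun u => in_mideal S u /\ mdeg u = j.

Definition single_degree n (S : mon n -> Prop) : Prop :=
  exists d, forall u, in_mingens S u -> mdeg u = d.

Definition polymatroidal n (S : mon n -> Prop) : Prop :=
  single_degree S /\
  forall u v, in_mingens S u -> in_mingens S v ->
  forall i : 'I_n, v i < u i ->
  exists j : 'I_n, u j < v j /\ in_mideal S (mexch u i j).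

Definition polymatroidal_SEP n (S : mon n -> Prop) : Prop :=
  polymatroidal S /\
  forall u v, in_mingens S u -> in_mingens S v ->
  forall i j : 'I_n, v i < u i -> u j < v j ->
  in_mideal S (mexch u i j).

Definition comp_polymatroidal_SEP n (S : mon n -> Prop) : Prop :=
  forall j : nat, (exists u, comp_gens S j u) ->
  polymatroidal_SEP (comp_gens S j).

(* the ideal generated by the variables x_k, k in V *)
Definition in_var_ideal n (V : {set 'I_n}) (w : mon n) : Prop :=
  exists2 k, k \in V & 0 < w k.

(* linear quotients: an ordering v_1..v_r of G(I) such that each colon
   (v_1,...,v_{i-1}) : v_i, i >= 2, is generated by a set of variables.
   The colon ideal J : v consists of the monomials w with w v in J. *)
Definition linear_quotients n (S : mon n -> Prop) : Prop :=
  exists s : seq (mon n),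
    [/\ uniq s,
        (forall u, u \in s <-> in_mingens S u) &
        forall i, 0 < i < size s ->
          exists V : {set 'I_n}, forall w : mon n,
            in_mideal (gens_pred (take i s)) (mmul w (nth [ffun=> 0] s i))
            <-> in_var_ideal V w].

(* Main.v *)
Require Import Defs.
From mathcomp Require Import all_boot zify.
From Stdlib Require Import Classical ClassicalEpsilon.

Set Implicit Arguments. Unset Strict Implicit. Unset Printing Implicit Defensive.

Lemma sum_eq_per n (f g h k : 'I_n -> nat) :
  (forall l, f l + g l = h l + k l) ->
  \sum_(l < n) f l + \sum_(l < n) g l = \sum_(l < n) h l + \sum_(l < n) k l.
Proof.
move=> H; rewrite -!big_split /=; apply: eq_bigr => l _; exact: H.
Qed.

Lemma sum_le_per n (f g h k : 'I_n -> nat) :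
  (forall l, h l + k l <= f l + g l) ->
  \sum_(l < n) h l + \sum_(l < n) k l <= \sum_(l < n) f l + \sum_(l < n) g l.
Proof.
move=> H; rewrite -!big_split /=; apply: leq_sum => l _; exact: H.
Qed.

Lemma sum_ind n (i : 'I_n) : \sum_(l < n) nat_of_bool (l == i) = 1.
Proof.
rewrite (bigD1 i) //= eqxx big1 // => l /negbTE ->; by [].
Qed.

Lemma sum_ind_mul n (i : 'I_n) (c : nat) : \sum_(l < n) ((l == i) * c) = c.
Proof.
rewrite (bigD1 i) //= eqxx big1 ?addn0 ?mul1n // => l /negbTE ->; by [].
Qed.

Lemma sum_pos_ex n (f : 'I_n -> nat) : 0 < \sum_(l < n) f l -> exists l, 0 < f l.
Proof.
move=> H; case: (boolP [exists l, 0 < f l]) => [/existsP//|/existsPn Hn].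
move: H; rewrite big1 // => l _; move: (Hn l); rewrite lt0n negbK => /eqP //.
Qed.

Lemma sum_zero_all n (f : 'I_n -> nat) : \sum_(l < n) f l = 0 -> forall l, f l = 0.
Proof.
move=> H l; apply/eqP; move/eqP: H; rewrite sum_nat_eq0 => /forallP /(_ l) //.
Qed.

Lemma sum_two n (f : 'I_n -> nat) (a b : 'I_n) : a != b ->
  f a + f b <= \sum_(l < n) f l.
Proof.
move=> ab; rewrite (bigD1 a) //= (bigD1 b) /=; last by rewrite eq_sym ab.
by rewrite addnA leq_addr.
Qed.

Lemma sum_one n (f : 'I_n -> nat) (a : 'I_n) : f a <= \sum_(l < n) f l.
Proof. by rewrite (bigD1 a) //= leq_addr. Qed.

Definition ek n (k : 'I_n) : mon n := [ffun j => nat_of_bool (j == k)].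

Lemma mdvdP n (u v : mon n) : reflect (forall i, u i <= v i) (mdvd u v).
Proof. exact: forallP. Qed.

Lemma mdvd_refl n (u : mon n) : mdvd u u.
Proof. by apply/mdvdP. Qed.

Lemma mdvd_trans n (u v w : mon n) : mdvd u v -> mdvd v w -> mdvd u w.
Proof.
move=> /mdvdP H1 /mdvdP H2; apply/mdvdP => i; exact: leq_trans (H1 i) (H2 i).
Qed.

Lemma mdvd_anti n (u v : mon n) : mdvd u v -> mdvd v u -> u = v.
Proof.
move=> /mdvdP H1 /mdvdP H2; apply/ffunP => i; apply/anti_leq; rewrite H1 H2.
by [].
Qed.

Lemma mdeg_le n (u v : mon n) : mdvd u v -> mdeg u <= mdeg v.
Proof. move=> /mdvdP H; apply: leq_sum => i _; exact: H. Qed.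

Lemma mdvd_eqdeg n (u v : mon n) : mdvd u v -> mdeg v <= mdeg u -> u = v.
Proof.
move=> /mdvdP H Hd; apply/ffunP => i.
have E : \sum_(l < n) u l + \sum_(l < n) (v l - u l) =
         \sum_(l < n) v l + \sum_(l < n) 0.
  apply: sum_eq_per => l; move: (H l); lia.
rewrite big1_eq addn0 in E.
have E2 : \sum_(l < n) (v l - u l) = 0.
  move: Hd E; rewrite /mdeg.
  set a := \sum_(l < n) (v l - u l); set b := \sum_(l < n) u l; set c := \sum_(i < n) v i.
  clearbody a b c; lia.
by apply/eqP; rewrite eqn_leq H /= -subn_eq0 (sum_zero_all E2 i).
Qed.

Lemma mdeg_lt n (u v : mon n) : mdvd u v -> u != v -> mdeg u < mdeg v.
Proof.
move=> H Hne; rewrite ltnNge; apply/negP => Hd.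
by move: Hne; rewrite (mdvd_eqdeg H Hd) eqxx.
Qed.

Lemma mexchE n (u : mon n) i j l : mexch u i j l = (u l - (l == i)) + (l == j).
Proof. by rewrite ffunE. Qed.

Lemma ekE n (k l : 'I_n) : ek k l = (l == k).
Proof. by rewrite ffunE. Qed.

Lemma mmulE n (u v : mon n) l : mmul u v l = u l + v l.
Proof. by rewrite ffunE. Qed.

Lemma mdeg_mexch n (u : mon n) i j : 0 < u i -> mdeg (mexch u i j) = mdeg u.
Proof.
move=> Hi.
have E : \sum_(l < n) mexch u i j l + \sum_(l < n) nat_of_bool (l == i) =
         \sum_(l < n) u l + \sum_(l < n) nat_of_bool (l == j).
  apply: sum_eq_per => l; rewrite mexchE.
  case: (l == j); case: (eqVneq l i) => [->|_] /=; lia.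
move: E; rewrite !sum_ind /mdeg; lia.
Qed.

Lemma mdeg_mmul n (u v : mon n) : mdeg (mmul u v) = mdeg u + mdeg v.
Proof. rewrite /mdeg -big_split; apply: eq_bigr => l _; by rewrite mmulE. Qed.

Lemma mdeg_ek n (k : 'I_n) : mdeg (ek k) = 1.
Proof. rewrite /mdeg -(sum_ind k); apply: eq_bigr => l _; by rewrite ekE. Qed.

Set Implicit Arguments. Unset Strict Implicit. Unset Printing Implicit Defensive.

Definition inI n (gens : seq (mon n)) (u : mon n) : bool := has (fun g => mdvd g u) gens.

Lemma inIP n (gens : seq (mon n)) u : in_mideal (gens_pred gens) u <-> inI gens u.
Proof.
split; first by case=> g Hg Hd; apply/hasP; exists g.
by case/hasP=> g Hg Hd; exists g.
Qed.

Lemma inI_dvd n (gens : seq (mon n)) u w : inI gens u -> mdvd u w -> inI gens w.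
Proof.
case/hasP=> g Hg Hd Huw; apply/hasP; exists g => //; exact: mdvd_trans Hd Huw.
Qed.

Definition ismin n (gens : seq (mon n)) (u : mon n) : bool :=
  (u \in gens) && all (fun g => mdvd g u ==> (g == u)) gens.

Lemma isminP n (gens : seq (mon n)) u : in_mingens (gens_pred gens) u <-> ismin gens u.
Proof.
split.
  case=> /inIP /hasP [g Hg Hgu] Hmin.
  have Eg : g = u by apply: Hmin => //; exists g => //; exact: mdvd_refl.
  apply/andP; split; first by rewrite -Eg.
  apply/allP => g' Hg'; apply/implyP => Hd; apply/eqP; apply: Hmin => //.
  by exists g' => //; exact: mdvd_refl.
case/andP=> Hu /allP Hall; split; first by exists u => //; exact: mdvd_refl.
move=> w /inIP /hasP [g Hg Hgw] Hwu.
have Egu : g = u by apply/eqP; move: (Hall g Hg) => /implyP; apply; exact: mdvd_trans Hgw Hwu.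
by apply: mdvd_anti => //; rewrite -Egu.
Qed.

Lemma ismin_inI n (gens : seq (mon n)) u : ismin gens u -> inI gens u.
Proof. case/andP=> Hu _; apply/hasP; exists u => //; exact: mdvd_refl. Qed.

Lemma ismin_min n (gens : seq (mon n)) u w : ismin gens u -> inI gens w -> mdvd w u -> w = u.
Proof. move/isminP => [_ H] /inIP Hw Hd; exact: H. Qed.

Lemma mingen_below n (gens : seq (mon n)) u : inI gens u -> exists2 g, ismin gens g & mdvd g u.
Proof.
case/hasP=> g0 Hg0 Hd0.
suff Q : forall m g, g \in gens -> mdeg g <= m -> exists2 h, ismin gens h & mdvd h g.
  case: (Q _ g0 Hg0 (leqnn _)) => h Hh Hhg; exists h => //; exact: mdvd_trans Hhg Hd0.
elim=> [|m IH] g Hg Hdeg.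
  exists g; last exact: mdvd_refl.
  rewrite /ismin Hg /=; apply/allP=> g' Hg'; apply/implyP => Hd.
  apply/eqP; apply: mdvd_eqdeg => //; move: Hdeg; lia.
case: (boolP (ismin gens g)) => [Hm|Hm]; first by exists g => //; exact: mdvd_refl.
move: Hm; rewrite /ismin Hg /= => /allPn [g' Hg']; rewrite negb_imply => /andP [Hd Hne].
have Hlt := mdeg_lt Hd Hne.
case: (IH g' Hg') => [|h Hh Hhg']; first by move: Hlt Hdeg; lia.
by exists h => //; exact: mdvd_trans Hhg' Hd.
Qed.

Lemma comp_mingens n (gens : seq (mon n)) u d :
  inI gens u -> mdeg u = d -> in_mingens (comp_gens (gens_pred gens) d) u.
Proof.
move=> Hu Hd; split; first by exists u; [split=> //; exact/inIP | exact: mdvd_refl].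
move=> w [g [_ Hgd] Hgw] Hwu.
have Egu : g = u by apply: mdvd_eqdeg; [exact: mdvd_trans Hgw Hwu| rewrite Hgd Hd].
by apply: mdvd_anti => //; rewrite -Egu.
Qed.

Lemma sep_exch n (gens : seq (mon n)) (v b : mon n) (i k : 'I_n) d :
  comp_polymatroidal_SEP (gens_pred gens) ->
  inI gens v -> inI gens b -> mdeg v = d -> mdeg b = d ->
  b i < v i -> v k < b k -> inI gens (mexch v i k).
Proof.
move=> H Hv Hb Hvd Hbd Hi Hk.
have Hne : exists u, comp_gens (gens_pred gens) d u by exists v; split=> //; exact/inIP.
case: (H d Hne) => _ Hsep.
case: (Hsep v b (comp_mingens Hv Hvd) (comp_mingens Hb Hbd) i k Hi Hk) => g [Hg Hgd] Hgw.
have Hdw : mdeg (mexch v i k) = d by rewrite mdeg_mexch //; move: Hi; lia.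
have -> : mexch v i k = g by apply/esym/mdvd_eqdeg => //; rewrite Hdw Hgd.
exact/inIP.
Qed.

Set Implicit Arguments. Unset Strict Implicit. Unset Printing Implicit Defensive.

Lemma between n (g x : mon n) D : mdvd g x -> mdeg g <= D -> D <= mdeg x ->
  exists c, [/\ mdvd g c, mdvd c x & mdeg c = D].
Proof.
move=> Hgx Hg Hx.
move Hm : (D - mdeg g) => m; elim: m g Hgx Hg Hm => [|m IH] g Hgx Hg Hm.
  by exists g; split=> //; [exact: mdvd_refl | move: Hm Hg; lia].
have Hlt : mdeg g < mdeg x by move: Hm Hx; lia.
have [j Hj] : exists j, g j < x j.
  case: (boolP [exists j, g j < x j]) => [/existsP //|/existsPn Hn].
  have Hxg : mdvd x g by apply/mdvdP => j; move: (Hn j); rewrite -leqNgt.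
  by move: (mdeg_le Hxg) Hlt; lia.
set g' := mmul (ek j) g.
have Hgg' : mdvd g g' by apply/mdvdP => l; rewrite mmulE leq_addl.
have Hg'x : mdvd g' x.
  apply/mdvdP => l; rewrite mmulE ekE; case: (eqVneq l j) => [->|_] /=.
    by rewrite add1n.
  by rewrite add0n; move/mdvdP: Hgx.
have Hdg' : mdeg g' = (mdeg g).+1 by rewrite mdeg_mmul mdeg_ek.
case: (IH g' Hg'x) => [|| c [H1 H2 H3]]; first by rewrite Hdg'; move: Hm; lia.
  by rewrite Hdg'; move: Hm; lia.
by exists c; split=> //; exact: mdvd_trans Hgg' H1.
Qed.

Definition maxm n (u v : mon n) : mon n := [ffun j => maxn (u j) (v j)].

Lemma maxmE n (u v : mon n) j : maxm u v j = maxn (u j) (v j).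
Proof. by rewrite ffunE. Qed.

Lemma mdvd_maxl n (u v : mon n) : mdvd u (maxm u v).
Proof. apply/mdvdP => j; rewrite maxmE; exact: leq_maxl. Qed.
Lemma mdvd_maxr n (u v : mon n) : mdvd v (maxm u v).
Proof. apply/mdvdP => j; rewrite maxmE; exact: leq_maxr. Qed.

Definition lexlt n (u v : mon n) : bool :=
  [exists k : 'I_n, (u k < v k) && [forall j : 'I_n, (j < k) ==> (u j == v j)]].

Lemma lexltP n (u v : mon n) :
  lexlt u v <-> exists k : 'I_n, u k < v k /\ forall j : 'I_n, j < k -> u j = v j.
Proof.
split.
  case/existsP => k /andP [H1 /forallP H2]; exists k; split=> // j Hj.
  by move/implyP: (H2 j) => /(_ Hj) /eqP.
case=> k [H1 H2]; apply/existsP; exists k; rewrite H1 /=; apply/forallP => j.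
by apply/implyP => Hj; rewrite H2.
Qed.

Lemma lexlt_asym n (u v : mon n) : lexlt u v -> lexlt v u -> False.
Proof.
move=> /lexltP [k1 [A1 B1]] /lexltP [k2 [A2 B2]].
case: (ltngtP k1 k2) => H.
- by move: (B2 _ H) A1; lia.
- by move: (B1 _ H) A2; lia.
- have E : k1 = k2 by apply: val_inj.
  by subst; move: A1 A2; lia.
Qed.

Lemma lexlt_irr n (u : mon n) : ~~ lexlt u u.
Proof. by apply/negP => H; exact: (lexlt_asym H H). Qed.

Lemma lexlt_trans n (u v w : mon n) : lexlt u v -> lexlt v w -> lexlt u w.
Proof.
move=> /lexltP [k1 [A1 B1]] /lexltP [k2 [A2 B2]]; apply/lexltP.
case: (ltngtP k1 k2) => H.
- exists k1; split; first by rewrite -(B2 _ H).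
  move=> j Hj; rewrite B1 // B2 //; exact: ltn_trans Hj H.
- exists k2; split; first by rewrite (B1 _ H).
  move=> j Hj; rewrite B1 ?B2 //; exact: ltn_trans Hj H.
- have E : k1 = k2 by apply: val_inj.
  subst; exists k2; split; first exact: ltn_trans A1 A2.
  by move=> j Hj; rewrite B1 // B2.
Qed.

Lemma lexlt_total n (u v : mon n) : u != v -> lexlt u v || lexlt v u.
Proof.
move=> Hne.
have [k0 Hk0] : exists k, u k != v k.
  case: (boolP [exists k, u k != v k]) => [/existsP //|/existsPn Hn].
  exfalso; move/eqP: Hne; apply; apply/ffunP => k; move: (Hn k); rewrite negbK => /eqP //.
case: (@arg_minnP _ k0 (fun k => u k != v k) (fun k : 'I_n => val k) Hk0) => k Hk Hmin.
have Hbefore : forall j : 'I_n, j < k -> u j = v j.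
  move=> j Hj; apply/eqP; apply: contraTT Hj => Hj; rewrite -leqNgt; exact: Hmin.
case: (ltngtP (u k) (v k)) => H.
- by apply/orP; left; apply/lexltP; exists k.
- by apply/orP; right; apply/lexltP; exists k; split=> // j Hj; rewrite Hbefore.
- by move: Hk; rewrite H eqxx.
Qed.

Lemma lexlt_mexch n (v : mon n) (i k : 'I_n) : i < k -> 0 < v i -> lexlt (mexch v i k) v.
Proof.
move=> Hik Hv; apply/lexltP; exists i; split.
  rewrite mexchE eqxx; have -> : (i == k) = false by apply/negbTE; apply/eqP => E; move: Hik; rewrite E ltnn.
  by move: Hv; rewrite /=; lia.
move=> j Hj; rewrite mexchE.
have -> : (j == i) = false by apply/negbTE; apply/eqP => E; move: Hj; rewrite E ltnn.
have -> : (j == k) = false.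
  by apply/negbTE; apply/eqP => E; move: (ltn_trans Hj Hik); rewrite E ltnn.
by rewrite /= subn0 addn0.
Qed.

Definition lekey n (PP : mon n -> nat) (u v : mon n) : bool :=
  (mdeg u < mdeg v) || (mdeg u == mdeg v) &&
  ((PP u < PP v) || (PP u == PP v) && ((u == v) || lexlt u v)).

Lemma lekey_refl n (PP : mon n -> nat) : reflexive (lekey PP).
Proof. by move=> u; rewrite /lekey !eqxx !ltnn. Qed.

Lemma lekey_total n (PP : mon n -> nat) : total (lekey PP).
Proof.
move=> u v; rewrite /lekey.
case: (ltngtP (mdeg u) (mdeg v)) => //= Hd; rewrite ?eqxx /=.
case: (ltngtP (PP u) (PP v)) => //= Hp; rewrite ?eqxx ?orbT //=.
case: (eqVneq u v) => [->|Hne]; first by rewrite ?eqxx.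
by move: (lexlt_total Hne) => /orP [->|->]; rewrite ?orbT.
Qed.

Lemma lekeyP n (PP : mon n -> nat) u v : lekey PP u v <->
  (mdeg u < mdeg v) \/ (mdeg u = mdeg v /\ (PP u < PP v \/ (PP u = PP v /\ (u = v \/ lexlt u v)))).
Proof.
rewrite /lekey; split.
  case/orP=> [H|/andP [/eqP H1 /orP [H2|/andP [/eqP H3 /orP [/eqP H4|H4]]]]]; tauto.
case=> [H|[H1 H]]; first by rewrite H.
rewrite H1 eqxx ltnn /=; case: H => [H|[H3 H]]; first by rewrite H.
rewrite H3 eqxx ltnn /=; case: H => [->|H]; by rewrite ?eqxx ?H ?orbT.
Qed.

Lemma lekey_trans n (PP : mon n -> nat) : transitive (lekey PP).
Proof.
move=> v u w /lekeyP H1 /lekeyP H2; apply/lekeyP.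
case: H1 => [D1|[D1 H1]]; case: H2 => [D2|[D2 H2]]; try (left; lia).
right; split; first lia.
case: H1 => [P1|[P1 H1]]; case: H2 => [P2|[P2 H2]]; try (left; lia).
right; split; first lia.
case: H1 => [E1|H1]; case: H2 => [E2|H2]; subst; try tauto.
right; exact: lexlt_trans H1 H2.
Qed.

Lemma lekey_anti n (PP : mon n -> nat) u v : lekey PP u v -> lekey PP v u -> u = v.
Proof.
move=> /lekeyP H1 /lekeyP H2.
case: H1 => [D1|[D1 H1]]; case: H2 => [D2|[D2 H2]]; try lia.
case: H1 => [P1|[P1 H1]]; case: H2 => [P2|[P2 H2]]; try lia.
case: H1 => [//|H1]; case: H2 => [//|H2].
by case: (lexlt_asym H1 H2).
Qed.

Set Implicit Arguments. Unset Strict Implicit. Unset Printing Implicit Defensive.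

Definition fpot n (lo hi : 'I_n -> nat) (j : 'I_n) (t : nat) : nat := (lo j - t) + (t - hi j).
Definition Pot n (lo hi : 'I_n -> nat) (x : mon n) : nat := \sum_(j < n) fpot lo hi j (x j).

Lemma sum_indf n (i : 'I_n) (F : 'I_n -> nat) : \sum_(l < n) ((l == i) * F l) = F i.
Proof.
rewrite (bigD1 i) //= eqxx mul1n big1 ?addn0 // => l /negbTE ->; by [].
Qed.

Lemma sum_ind2 n (k i : 'I_n) (F G : 'I_n -> nat) :
  \sum_(l < n) ((l == k) * F l + (l == i) * G l) = F k + G i.
Proof. by rewrite big_split /= !sum_indf. Qed.

Lemma pot_exch n (lo hi : 'I_n -> nat) (v : mon n) (i k : 'I_n) :
  i != k -> 0 < v i ->
  Pot lo hi (mexch v i k) + fpot lo hi k (v k) + fpot lo hi i (v i) =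
  Pot lo hi v + fpot lo hi k (v k).+1 + fpot lo hi i (v i).-1.
Proof.
move=> Hik Hv.
have E : \sum_(l < n) fpot lo hi l (mexch v i k l) +
         \sum_(l < n) ((l == k) * fpot lo hi l (v l) + (l == i) * fpot lo hi l (v l)) =
         \sum_(l < n) fpot lo hi l (v l) +
         \sum_(l < n) ((l == k) * fpot lo hi l (v l).+1 + (l == i) * fpot lo hi l (v l).-1).
  apply: sum_eq_per => l; rewrite mexchE.
  have [Elk|Hlk] := eqVneq l k; have [Eli|Hli] := eqVneq l i.
  - by move: Hik; rewrite -Eli Elk eqxx.
  - by rewrite /= ?subn0 ?addn0 ?addn1 ?subn1 ?mul1n ?mul0n ?add0n ?addn0 addnC.
  - by rewrite /= ?subn0 ?addn0 ?addn1 ?subn1 ?mul1n ?mul0n ?add0n ?addn0 addnC.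
  - by rewrite /= ?subn0 ?addn0 ?addn1 ?subn1 ?mul1n ?mul0n ?add0n ?addn0.
by move: E; rewrite !sum_ind2 /Pot !addnA.
Qed.

Lemma sum_deg_diff n (b v : mon n) : mdeg b = mdeg v ->
  \sum_(j < n) (b j - v j) = \sum_(j < n) (v j - b j).
Proof.
move=> Hd.
have E : \sum_(j < n) b j + \sum_(j < n) (v j - b j) =
         \sum_(j < n) v j + \sum_(j < n) (b j - v j).
  apply: sum_eq_per => l; lia.
move: E Hd; rewrite /mdeg; lia.
Qed.

Lemma potG n (lo hi : 'I_n -> nat) (b v : mon n) :
  (forall j, lo j <= hi j) ->
  mdeg b = mdeg v ->
  (Pot lo hi b < Pot lo hi v \/ (Pot lo hi b = Pot lo hi v /\ lexlt b v)) ->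
  exists k i, [/\ v k < b k, b i < v i &
     (Pot lo hi (mexch v i k) < Pot lo hi v \/
      (Pot lo hi (mexch v i k) = Pot lo hi v /\ i < k))].
Proof.
move=> Hlh Hdeg H0.
have Hm := sum_deg_diff Hdeg.
have neqAB : forall k i, v k < b k -> b i < v i -> i != k.
  by move=> k i H1 H2; apply/eqP => E; move: H1 H2; rewrite E; lia.
have lexk0 : lexlt b v -> exists k0 : 'I_n, b k0 < v k0 /\
     forall k, v k < b k -> k0 < k.
  move=> /lexltP [k0 [H1 H2]]; exists k0; split => // k Hk.
  case: (ltngtP k0 k) => // Hc.
    by move: (H2 _ Hc) Hk; lia.
  have E : k0 = k by apply: val_inj.
  by move: H1 Hk; rewrite E; lia.
have mv : forall k i, v k < b k -> b i < v i ->
    Pot lo hi (mexch v i k) + fpot lo hi k (v k) + fpot lo hi i (v i) =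
    Pot lo hi v + fpot lo hi k (v k).+1 + fpot lo hi i (v i).-1.
  move=> k i H1 H2; apply: pot_exch; [exact: neqAB H1 H2 | move: H2; lia].
case: (boolP [exists k, (v k < b k) && (v k < lo k)]) =>
    [/existsP [k /andP [Hk1 Hk2]]|/existsPn HA1].
  case: (boolP [exists i, (b i < v i) && (lo i < v i)]) =>
      [/existsP [i /andP [Hi1 Hi2]]|/existsPn HB].
    exists k, i; split => //; left.
    move: (mv k i Hk1 Hi1) (Hlh k) (Hlh i); rewrite /fpot; lia.
  have S : \sum_(j < n) fpot lo hi j (v j) + \sum_(j < n) (v j - b j) <=
           \sum_(j < n) fpot lo hi j (b j) + \sum_(j < n) (b j - v j).
    apply: sum_le_per => j; move: (HB j) (Hlh j); rewrite /fpot; lia.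
  case: H0 => [Hlt|[Heq Hlex]]; first by move: S Hlt; rewrite Hm /Pot; lia.
  case: (lexk0 Hlex) => k0 [Hk0 Hgt].
  exists k, k0; split => //; right; split; last exact: Hgt k Hk1.
  move: (mv k k0 Hk1 Hk0) (HB k0) (Hlh k) (Hlh k0); rewrite /fpot; lia.
case: (boolP [exists k, (v k < b k) && (v k < hi k)]) =>
    [/existsP [k /andP [Hk1 Hk2]]|/existsPn HA2].
  case: (boolP [exists i, (b i < v i) && (hi i < v i)]) =>
      [/existsP [i /andP [Hi1 Hi2]]|/existsPn HB].
    exists k, i; split => //; left.
    move: (mv k i Hk1 Hi1) (HA1 k) (Hlh k) (Hlh i); rewrite /fpot; lia.
  have S : Pot lo hi v <= Pot lo hi b.
    apply: leq_sum => j _; move: (HA1 j) (HB j) (Hlh j); rewrite /fpot; lia.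
  case: H0 => [Hlt|[Heq Hlex]]; first by move: S Hlt; lia.
  case: (lexk0 Hlex) => k0 [Hk0 Hgt].
  case: (boolP (lo k0 < v k0)) => Hk0lo.
    exists k, k0; split => //; right; split; last exact: Hgt k Hk1.
    move: (mv k k0 Hk1 Hk0) (HA1 k) (HB k0) (Hlh k) (Hlh k0); rewrite /fpot; lia.
  have S2 : \sum_(j < n) fpot lo hi j (v j) + \sum_(j < n) nat_of_bool (j == k0) <=
            \sum_(j < n) fpot lo hi j (b j) + \sum_(j < n) 0.
    apply: sum_le_per => j; case: (eqVneq j k0) => [->|_] /=.
      by move: Hk0 Hk0lo (Hlh k0); rewrite /fpot; lia.
    move: (HA1 j) (HB j) (Hlh j); rewrite /fpot; lia.
  by move: S2 Heq; rewrite sum_ind big1_eq /Pot; lia.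
case: (boolP [exists k, [exists i, [&& v k < b k, b i < v i, hi i < v i & i < k]]]) =>
    [/existsP [k /existsP [i /and4P [H1 H2 H3 H4]]]| /existsPn HC].
  exists k, i; split => //; right; split => //.
  move: (mv k i H1 H2) (HA1 k) (HA2 k) (Hlh k) (Hlh i); rewrite /fpot; lia.
have S : \sum_(j < n) fpot lo hi j (v j) + \sum_(j < n) (b j - v j) <=
         \sum_(j < n) fpot lo hi j (b j) + \sum_(j < n) ((hi j < v j) * (v j - b j)).
  apply: sum_le_per => j; case: (ltnP (hi j) (v j)) => Hh /=; rewrite ?mul1n ?mul0n;
  move: (HA1 j) (HA2 j) (Hlh j) Hh; rewrite /fpot; lia.
have T : \sum_(j < n) ((hi j < v j) * (v j - b j)) + \sum_(j < n) 0 <=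
         \sum_(j < n) (v j - b j) + \sum_(j < n) 0.
  apply: sum_le_per => j; case: (hi j < v j); rewrite /= ?mul1n ?mul0n; lia.
rewrite !big1_eq !addn0 in T.
case: H0 => [Hlt|[Heq Hlex]]; first by move: S T Hlt; rewrite Hm /Pot; lia.
case: (lexk0 Hlex) => k0 [Hk0 Hgt].
have [k Hk] : exists k, v k < b k.
  have Hpos : 0 < \sum_(j < n) (b j - v j).
    rewrite Hm; apply: leq_trans (sum_one _ k0); move: Hk0; lia.
  case: (sum_pos_ex Hpos) => k Hk; exists k; move: Hk; lia.
have Hk0hi : v k0 <= hi k0.
  rewrite leqNgt; apply/negP => Hh; move: (HC k) => /existsPn /(_ k0).
  by rewrite Hk Hk0 Hh (Hgt k Hk).
have T2 : \sum_(j < n) ((hi j < v j) * (v j - b j)) + \sum_(j < n) nat_of_bool (j == k0) <=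
          \sum_(j < n) (v j - b j) + \sum_(j < n) 0.
  apply: sum_le_per => j; case: (eqVneq j k0) => [->|_];
  case: (ltnP (hi _) (v _)) => Hh /=; rewrite ?mul1n ?mul0n; try lia.
rewrite sum_ind big1_eq addn0 in T2.
exfalso; by move: S T2 Heq; rewrite Hm /Pot; lia.
Qed.

Set Implicit Arguments. Unset Strict Implicit. Unset Printing Implicit Defensive.

Definition cmin (Q : nat -> Prop) : nat :=
  match excluded_middle_informative (exists t, Q t /\ forall s, Q s -> t <= s) with
  | left H => proj1_sig (constructive_indefinite_description _ H)
  | right _ => 0
  end.

Lemma min_exists (Q : nat -> Prop) t0 : Q t0 -> exists t, Q t /\ forall s, Q s -> t <= s.
Proof.
elim/ltn_ind: t0 => t IH Qt.
case: (classic (exists s, s < t /\ Q s)) => [[s [Hs Qs]]|Hn].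
  exact: (IH s).
exists t; split => // s Qs; rewrite leqNgt; apply/negP => Hs; apply: Hn; by exists s.
Qed.

Lemma cminP (Q : nat -> Prop) t0 : Q t0 -> Q (cmin Q) /\ forall s, Q s -> cmin Q <= s.
Proof.
move=> Q0; rewrite /cmin; case: excluded_middle_informative => [H|H].
  exact: proj2_sig (constructive_indefinite_description _ H).
by exfalso; apply: H; apply: min_exists Q0.
Qed.

Lemma cmin_none (Q : nat -> Prop) : (forall t, ~ Q t) -> cmin Q = 0.
Proof.
move=> H; rewrite /cmin; case: excluded_middle_informative => // H1.
by exfalso; case: H1 => t [Qt _]; case: (H t).
Qed.

Definition Lp n (gens : seq (mon n)) (d : nat) (y : mon n) : Prop := inI gens y /\ mdeg y = d.

Definition lo n (gens : seq (mon n)) d (j : 'I_n) : nat :=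
  cmin (fun t => exists y, Lp gens d y /\ y j = t).
Definition hi n (gens : seq (mon n)) d (j : 'I_n) : nat :=
  cmin (fun t => forall y, Lp gens d y -> y j <= t).

Lemma lo_le n (gens : seq (mon n)) d y j : Lp gens d y -> lo gens d j <= y j.
Proof.
move=> Hy.
have [_ H] := @cminP (fun t => exists y, Lp gens d y /\ y j = t) (y j) (ex_intro _ y (conj Hy erefl)).
by apply: H; exists y.
Qed.

Lemma coord_le_deg n (y : mon n) j : y j <= mdeg y.
Proof. exact: (sum_one (fun l => y l) j). Qed.

Lemma hi_ge n (gens : seq (mon n)) d y j : Lp gens d y -> y j <= hi gens d j.
Proof.
move=> Hy.
have Q0 : forall y', Lp gens d y' -> y' j <= d.
  by move=> y' [_ Hd]; rewrite -Hd; exact: coord_le_deg.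
have [H _] := @cminP (fun t => forall y, Lp gens d y -> y j <= t) d Q0.
exact: H.
Qed.

Lemma hi_attained n (gens : seq (mon n)) d y0 j : Lp gens d y0 ->
  exists z, Lp gens d z /\ z j = hi gens d j.
Proof.
move=> Hy0.
have Q0 : forall y', Lp gens d y' -> y' j <= d.
  by move=> y' [_ Hd]; rewrite -Hd; exact: coord_le_deg.
have [H1 H2] := @cminP (fun t => forall y, Lp gens d y -> y j <= t) d Q0.
apply: NNPP => Hn.
have Hlt : forall z, Lp gens d z -> z j < hi gens d j.
  move=> z Hz; rewrite ltn_neqAle (H1 z Hz) andbT; apply/eqP => E; apply: Hn; by exists z.
have Hpos := Hlt y0 Hy0.
have H3 : hi gens d j <= (hi gens d j).-1.
  by apply: H2 => z Hz; move: (Hlt z Hz); lia.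
by move: H3 Hpos; lia.
Qed.

Lemma lo_attained n (gens : seq (mon n)) d y0 j : Lp gens d y0 ->
  exists z, Lp gens d z /\ z j = lo gens d j.
Proof.
move=> Hy0.
have [[z [Hz E]] _] := @cminP (fun t => exists y, Lp gens d y /\ y j = t) (y0 j)
   (ex_intro _ y0 (conj Hy0 erefl)).
by exists z.
Qed.

Lemma lo_le_hi n (gens : seq (mon n)) d j : lo gens d j <= hi gens d j.
Proof.
case: (classic (exists y, Lp gens d y)) => [[y Hy]|Hn].
  exact: leq_trans (lo_le j Hy) (hi_ge j Hy).
rewrite /lo cmin_none // => t [y [Hy _]]; apply: Hn; by exists y.
Qed.

Lemma one_step n (gens : seq (mon n)) d (y z z' : mon n) (i k : 'I_n) :
  comp_polymatroidal_SEP (gens_pred gens) ->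
  Lp gens d y -> Lp gens d z -> Lp gens d z' ->
  i != k -> y k < z k -> z' i < y i -> inI gens (mexch y i k).
Proof.
move=> Hsep [Hy Hyd] Hz [Hz' Hz'd] Hik Hk Hi.
move Hm : (z i) => m; elim/ltn_ind: m z Hz Hk Hm => m IH z [Hz Hzd] Hk Hm.
case: (ltnP (z i) (y i)) => Hzi.
  exact: (sep_exch Hsep Hy Hz Hyd Hzd Hzi Hk).
case: (ltnP (y k) (z' k)) => Hz'k.
  exact: (sep_exch Hsep Hy Hz' Hyd Hz'd Hi Hz'k).
have Hzz' : z' i < z i by move: Hi Hzi; lia.
have [j Hj] : exists j, z j < z' j.
  have Hpos : 0 < \sum_(l < n) (z' l - z l).
    rewrite -(sum_deg_diff (b := z) (v := z')); last by rewrite Hzd Hz'd.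
    apply: leq_trans (sum_one _ i); move: Hzz'; lia.
  case: (sum_pos_ex Hpos) => j Hj; exists j; move: Hj; lia.
have Hjk : (k == j) = false by apply/negbTE/eqP => E; move: Hj Hz'k Hk; rewrite -E; lia.
have Hji : (i == j) = false by apply/negbTE/eqP => E; move: Hj Hzz'; rewrite -E; lia.
have Hki : (k == i) = false by apply/negbTE; rewrite eq_sym.
have Hz1 : inI gens (mexch z i j) := sep_exch Hsep Hz Hz' Hzd Hz'd Hzz' Hj.
have Hz1d : mdeg (mexch z i j) = d by rewrite mdeg_mexch //; move: Hzz'; lia.
apply: (IH (mexch z i j i) _ (mexch z i j)) => //.
- by rewrite mexchE eqxx Hji -Hm /=; move: Hzz'; lia.
- by rewrite mexchE Hki Hjk /= subn0 addn0.
Qed.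

Lemma box n (gens : seq (mon n)) d (x y0 : mon n) :
  comp_polymatroidal_SEP (gens_pred gens) ->
  Lp gens d y0 -> mdeg x = d ->
  (forall j, lo gens d j <= x j) -> (forall j, x j <= hi gens d j) -> inI gens x.
Proof.
move=> Hsep Hy0 Hxd Hlo Hhi.
move Hm : (\sum_(j < n) ((x j - y0 j) + (y0 j - x j))) => m.
elim/ltn_ind: m y0 Hy0 Hm => m IH y [Hy Hyd] Hm.
case: (boolP [exists k, y k < x k]) => [/existsP [k Hk]|/existsPn Hn].
  have Hpos : 0 < \sum_(l < n) (y l - x l).
    rewrite -(sum_deg_diff (b := x) (v := y)); last by rewrite Hxd Hyd.
    apply: leq_trans (sum_one _ k); move: Hk; lia.
  have [i Hi] : exists i, x i < y i.
    case: (sum_pos_ex Hpos) => i Hi; exists i; move: Hi; lia.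
  have Hik : i != k by apply/eqP => E; move: Hi Hk; rewrite E; lia.
  have [z [Hz Ez]] := hi_attained k (conj Hy Hyd).
  have [z' [Hz' Ez']] := lo_attained i (conj Hy Hyd).
  have Hzk : y k < z k by rewrite Ez; exact: leq_trans Hk (Hhi k).
  have Hz'i : z' i < y i by rewrite Ez'; exact: leq_ltn_trans (Hlo i) Hi.
  have Hy1 := one_step Hsep (conj Hy Hyd) Hz Hz' Hik Hzk Hz'i.
  have Hy1d : mdeg (mexch y i k) = d by rewrite mdeg_mexch //; move: Hi; lia.
  have E : \sum_(l < n) ((x l - mexch y i k l) + (mexch y i k l - x l)) +
           \sum_(l < n) (nat_of_bool (l == k) + nat_of_bool (l == i)) =
           \sum_(l < n) ((x l - y l) + (y l - x l)) + \sum_(l < n) 0.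
    apply: sum_eq_per => l; rewrite mexchE.
    have [Elk|Hlk] := eqVneq l k; have [Eli|Hli] := eqVneq l i.
    - by move: Hik; rewrite -Eli Elk eqxx.
    - rewrite Elk /=; move: Hk; lia.
    - rewrite Eli /=; move: Hi; lia.
    - rewrite /=; lia.
  have S2 : \sum_(l < n) (nat_of_bool (l == k) + nat_of_bool (l == i)) = 2.
    by rewrite big_split /= !sum_ind.
  rewrite S2 big1_eq addn0 in E.
  apply: (IH _ _ (mexch y i k) (conj Hy1 Hy1d) erefl).
  by move: E Hm; lia.
have Hdv : mdvd x y.
  by apply/mdvdP => j; move: (Hn j); rewrite -leqNgt.
have Exy : x = y by apply: (mdvd_eqdeg Hdv); rewrite Hxd Hyd.
by rewrite Exy.
Qed.

Set Implicit Arguments. Unset Strict Implicit. Unset Printing Implicit Defensive.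

Ltac clearprops := repeat match goal with H : ?T |- _ =>
  lazymatch type of T with Prop => clear H end end.
Ltac slia := clearprops; lia.

Definition PP n (gens : seq (mon n)) (u : mon n) : nat :=
  Pot (lo gens (mdeg u).-1) (hi gens (mdeg u).-1) u.

Lemma mdvd_exch_mul n (v : mon n) i k : mdvd (mexch v i k) (mmul (ek k) v).
Proof.
apply/mdvdP => l; rewrite mexchE mmulE ekE; case: (l == i); case: (l == k) => /=; lia.
Qed.

Lemma finish n (gens : seq (mon n)) (v : mon n) (i k : 'I_n) :
  ismin gens v -> 0 < v i -> i != k -> inI gens (mexch v i k) ->
  (ismin gens (mexch v i k) ->
     PP gens (mexch v i k) < PP gens v \/
     (PP gens (mexch v i k) = PP gens v /\ lexlt (mexch v i k) v)) ->
  exists2 g, [/\ ismin gens g, lekey (PP gens) g v & g != v] & mdvd g (mmul (ek k) v).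
Proof.
move=> Hv Hvi Hik Hw Hcond.
set w := mexch v i k.
have Hwd : mdeg w = mdeg v by rewrite /w mdeg_mexch.
have Hwv : w != v.
  apply/eqP => E; have := congr1 (fun f : mon n => f k) E; rewrite /= /w mexchE.
  have Hki : (k == i) = false by rewrite eq_sym; apply/negbTE.
  rewrite eqxx Hki /=; lia.
case: (boolP (ismin gens w)) => Hmin.
  exists w; last exact: mdvd_exch_mul.
  split => //; apply/lekeyP; right; split => //.
  case: (Hcond Hmin) => [H|[H1 H2]]; [by left | by right; split => //; right].
case: (mingen_below Hw) => g Hg Hgw.
have Hgw' : g != w by apply/eqP => E; move: Hmin; rewrite -E Hg.
have Hlt := mdeg_lt Hgw Hgw'.
exists g; last exact: mdvd_trans Hgw (mdvd_exch_mul v i k).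
split => //; first by apply/lekeyP; left; rewrite -Hwd.
by apply/eqP => E; move: Hlt; rewrite E Hwd ltnn.
Qed.

Lemma fpot_low n (lo hi : 'I_n -> nat) j t : t < lo j -> lo j <= hi j ->
  fpot lo hi j t.+1 + 1 = fpot lo hi j t.
Proof. rewrite /fpot; lia. Qed.

Lemma fpot_lowerok n (lo hi : 'I_n -> nat) j t : lo j < t ->
  fpot lo hi j t.-1 <= fpot lo hi j t.
Proof. rewrite /fpot; lia. Qed.

Lemma cond_of_pot n (gens : seq (mon n)) (v : mon n) (i k : 'I_n) : 0 < v i ->
  (Pot (lo gens (mdeg v).-1) (hi gens (mdeg v).-1) (mexch v i k) <
     Pot (lo gens (mdeg v).-1) (hi gens (mdeg v).-1) v \/
   (Pot (lo gens (mdeg v).-1) (hi gens (mdeg v).-1) (mexch v i k) =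
     Pot (lo gens (mdeg v).-1) (hi gens (mdeg v).-1) v /\ i < k)) ->
  ismin gens (mexch v i k) ->
  PP gens (mexch v i k) < PP gens v \/
  (PP gens (mexch v i k) = PP gens v /\ lexlt (mexch v i k) v).
Proof.
move=> Hvi Hw _; rewrite /PP mdeg_mexch //.
case: Hw => [H1|[H1 H2]]; [by left | right; split => //; exact: lexlt_mexch].
Qed.

Lemma core n (gens : seq (mon n)) (v b : mon n) :
  comp_polymatroidal_SEP (gens_pred gens) ->
  ismin gens v -> ismin gens b -> lekey (PP gens) b v -> b != v ->
  exists k, v k < b k /\
    exists2 g, [/\ ismin gens g, lekey (PP gens) g v & g != v] & mdvd g (mmul (ek k) v).
Proof.
move=> Hsep Hv Hb Hkey Hne.
have HvI := ismin_inI Hv; have HbI := ismin_inI Hb.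
have Hlh : forall j, lo gens (mdeg v).-1 j <= hi gens (mdeg v).-1 j by move=> j; exact: lo_le_hi.
case/lekeyP: Hkey => [Hdeg | [Hdeg Hrest]]; last first.
  have Hpot : Pot (lo gens (mdeg v).-1) (hi gens (mdeg v).-1) b <
                Pot (lo gens (mdeg v).-1) (hi gens (mdeg v).-1) v \/
              (Pot (lo gens (mdeg v).-1) (hi gens (mdeg v).-1) b =
                Pot (lo gens (mdeg v).-1) (hi gens (mdeg v).-1) v /\ lexlt b v).
    move: Hrest; rewrite /PP Hdeg => -[H1|[H1 [E|H2]]]; [by left | by case/eqP: Hne | by right].
  case: (potG Hlh Hdeg Hpot) => k [i [Hk Hi Hw]].
  have Hik : i != k by apply/eqP => E; move: Hk Hi; rewrite E; lia.
  have Hvi : 0 < v i by move: Hi; lia.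
  exists k; split => //; apply: (finish (i := i)) => //.
    exact: (sep_exch Hsep HvI HbI erefl Hdeg Hi Hk).
  exact: cond_of_pot.
have Hd1 : 0 < mdeg v by move: Hdeg; slia.
have Hmax : mdeg v <= mdeg (maxm b v) := mdeg_le (mdvd_maxr b v).
case: (between (mdvd_maxl b v) (ltnW Hdeg) Hmax) => c [Hbc Hcm Hcd].
have HcI : inI gens c := inI_dvd HbI Hbc.
have Hb1 : mdeg b <= (mdeg v).-1 by move: Hdeg; slia.
have Hc1 : (mdeg v).-1 <= mdeg c by rewrite Hcd; slia.
case: (between Hbc Hb1 Hc1) => y [Hby Hyc Hyd].
have HyL : Lp gens (mdeg v).-1 y := conj (inI_dvd HbI Hby) Hyd.
have Hcv : c != v.
  apply/eqP => E; move: Hne; rewrite (ismin_min Hv HbI) ?eqxx //; by rewrite -E.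
have Hbk : forall k, v k < c k -> v k < b k.
  move=> k Hk; move/mdvdP: Hcm => /(_ k); rewrite maxmE => Hck; move: Hk Hck; slia.
have Hloc : forall j, lo gens (mdeg v).-1 j <= c j.
  move=> j; exact: leq_trans (lo_le j HyL) (mdvdP _ _ Hyc j).
have S1 : \sum_(j < n) (c j - y j) = 1.
  have E : \sum_(j < n) y j + \sum_(j < n) (c j - y j) = \sum_(j < n) c j + \sum_(j < n) 0.
    apply: sum_eq_per => j; move/mdvdP: Hyc => /(_ j); slia.
  move: E Hyd Hcd Hd1; rewrite big1_eq /mdeg; slia.
have Potc : Pot (lo gens (mdeg v).-1) (hi gens (mdeg v).-1) c <= 1.
  rewrite -S1 /Pot; apply: leq_sum => j _; rewrite /fpot.
  move: (Hloc j) (hi_ge j HyL) (mdvdP _ _ Hyc j); slia.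
have Hik_of : forall k i, v k < c k -> c i < v i -> i != k.
  by move=> k i H1 H2; apply/eqP => E; move: H1 H2; rewrite E; slia.
case: (boolP [exists k, v k < lo gens (mdeg v).-1 k]) => [/existsP [k Hk] | /existsPn Hn].
  have Hck : v k < c k by exact: leq_trans Hk (Hloc k).
  have Hpos : 0 < \sum_(l < n) (v l - c l).
    rewrite -(sum_deg_diff (b := c) (v := v)) //.
    apply: leq_trans (sum_one _ k); move: Hck; slia.
  have [i Hi] : exists i, c i < v i.
    case: (sum_pos_ex Hpos) => i Hi; exists i; move: Hi; slia.
  have Hik := Hik_of k i Hck Hi.
  have Hvi : 0 < v i by move: Hi; slia.
  exists k; split; first exact: Hbk.
  apply: (finish (i := i)) => //.
    exact: (sep_exch Hsep HvI HcI erefl Hcd Hi Hck).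
  apply: cond_of_pot => //; left.
  move: (pot_exch (lo gens (mdeg v).-1) (hi gens (mdeg v).-1) Hik Hvi)
    (fpot_low Hk (Hlh k)) (fpot_lowerok (hi gens (mdeg v).-1) (leq_ltn_trans (Hloc i) Hi)).
  slia.
have Pv2 : 2 <= Pot (lo gens (mdeg v).-1) (hi gens (mdeg v).-1) v.
  case: (leqP 2 (Pot (lo gens (mdeg v).-1) (hi gens (mdeg v).-1) v)) => // Hp; exfalso.
  have Hlov : forall j, lo gens (mdeg v).-1 j <= v j by move=> j; move: (Hn j); rewrite -leqNgt.
  have HsumV : \sum_(j < n) (v j - hi gens (mdeg v).-1 j) <= 1.
    apply: leq_trans _ (ltnSE Hp); rewrite /Pot; apply: leq_sum => j _; rewrite /fpot.
    move: (Hlov j); slia.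
  have Hx : forall l, 0 < v l -> lo gens (mdeg v).-1 l <= (v l).-1 ->
      (v l).-1 <= hi gens (mdeg v).-1 l ->
      (forall j, j != l -> v j <= hi gens (mdeg v).-1 j) -> False.
    move=> l Hl1 Hl2 Hl3 Hl4.
    pose x : mon n := [ffun j => v j - (j == l)].
    have Hxv : mdvd x v by apply/mdvdP => j; rewrite ffunE leq_subr.
    have Hxd : mdeg x = (mdeg v).-1.
      have E : \sum_(j < n) x j + \sum_(j < n) nat_of_bool (j == l) =
               \sum_(j < n) v j + \sum_(j < n) 0.
        apply: sum_eq_per => j; rewrite ffunE; case: (eqVneq j l) => [->|_] /=; move: Hl1; slia.
      move: E; rewrite sum_ind big1_eq /mdeg; slia.
    have HxI : inI gens x.
      apply: (box Hsep HyL Hxd) => j; rewrite ffunE; case: (eqVneq j l) => [->|Hjl] /=.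
      - by move: Hl2; slia.
      - by rewrite subn0.
      - by move: Hl3; slia.
      - by rewrite subn0; exact: Hl4.
    have := ismin_min Hv HxI Hxv => Exv.
    by move: Hxd; rewrite Exv; move: Hd1; slia.
  case: (boolP [exists l, hi gens (mdeg v).-1 l < v l]) => [/existsP [l Hl] | /existsPn Hn2].
    apply: (Hx l).
    - by move: Hl; slia.
    - by move: Hl (Hlh l); slia.
    - by move: (leq_trans (sum_one (fun j => v j - hi gens (mdeg v).-1 j) l) HsumV); slia.
    - move=> j Hjl; rewrite leqNgt; apply/negP => Hj.
      by move: (leq_trans (sum_two (fun j => v j - hi gens (mdeg v).-1 j) Hjl) HsumV) Hl Hj; slia.
  case: (boolP [exists l, lo gens (mdeg v).-1 l < v l]) => [/existsP [l Hl] | /existsPn Hn3].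
    apply: (Hx l).
    - by move: Hl; slia.
    - by move: Hl; slia.
    - by move: (Hn2 l); rewrite -leqNgt; slia.
    - by move=> j _; move: (Hn2 j); rewrite -leqNgt.
  have Hvy : mdvd v y.
    apply/mdvdP => j; move: (Hn3 j); rewrite -leqNgt => Hj.
    exact: leq_trans Hj (lo_le j HyL).
  by move: (mdeg_le Hvy) Hyd Hd1; slia.
have Pc1 : Pot (lo gens (mdeg v).-1) (hi gens (mdeg v).-1) c <
           Pot (lo gens (mdeg v).-1) (hi gens (mdeg v).-1) v.
  exact: leq_ltn_trans Potc Pv2.
case: (potG Hlh Hcd (or_introl Pc1)) => k [i [Hk Hi Hw]].
have Hik := Hik_of k i Hk Hi.
have Hvi : 0 < v i by move: Hi; slia.
exists k; split; first exact: Hbk.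
apply: (finish (i := i)) => //.
  exact: (sep_exch Hsep HvI HcI erefl Hcd Hi Hk).
exact: cond_of_pot.
Qed.

Set Implicit Arguments. Unset Strict Implicit. Unset Printing Implicit Defensive.

Theorem theorem3p8 (n : nat) (gens : seq (mon n)) :
  comp_polymatroidal_SEP (gens_pred gens) ->
  linear_quotients (gens_pred gens).
Proof.
move=> Hsep.
set key := lekey (PP gens).
have Htot : total key := @lekey_total _ (PP gens).
have Htr : transitive key := @lekey_trans _ (PP gens).
have Hrf : reflexive key := @lekey_refl _ (PP gens).
set s := sort key (undup (filter (ismin gens) gens)).
have Hsorted : sorted key s := sort_sorted Htot _.
have Huniq : uniq s by rewrite sort_uniq undup_uniq.
have Hmem : forall u, (u \in s) = ismin gens u.
  move=> u; rewrite mem_sort mem_undup mem_filter.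
  by case: (boolP (ismin gens u)) => //= /andP [].
exists s; split => //.
  by move=> u; rewrite Hmem; split => /isminP.
move=> i /andP [Hi0 Hi].
set x0 : mon n := [ffun=> 0].
set v := nth x0 s i.
have Hv : ismin gens v by rewrite -Hmem mem_nth.
set E := take i s.
have HsizeE : size E = i by rewrite size_takel // ltnW.
have F1 : forall g, g \in E -> [/\ ismin gens g, key g v & g != v].
  move=> g Hg.
  have Ht : index g E < i by rewrite -HsizeE index_mem.
  have Eg : nth x0 s (index g E) = g by rewrite -(nth_take x0 Ht) nth_index.
  have Hts : index g E < size s by exact: ltn_trans Ht Hi.
  split.
  - by rewrite -Hmem -Eg mem_nth.
  - rewrite -Eg; apply: (sorted_leq_nth Htr Hrf x0 Hsorted) => //; exact: ltnW.
  - rewrite -Eg /v (nth_uniq x0 Hts Hi Huniq); apply/eqP => E'; move: Ht; rewrite E' ltnn.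
    by [].
have F2 : forall g, ismin gens g -> key g v -> g != v -> g \in E.
  move=> g Hg Hgv Hne.
  have Hgs : g \in s by rewrite Hmem.
  set t := index g s.
  have Hts : t < size s by rewrite index_mem.
  have Eg : nth x0 s t = g by rewrite nth_index.
  case: (ltnP t i) => Hti.
    rewrite /E -Eg -(nth_take x0 Hti); apply: mem_nth; rewrite HsizeE //.
  have Hvg : key v g by rewrite -Eg; apply: (sorted_leq_nth Htr Hrf x0 Hsorted).
  by move: Hne; rewrite (lekey_anti Hgv Hvg) eqxx.
exists [set k : 'I_n | has (fun g => mdvd g (mmul (ek k) v)) E] => w; split.
  case=> g Hg Hdvd.
  case: (F1 g Hg) => Hgm Hkey Hne.
  case: (core Hsep Hv Hgm Hkey Hne) => k [Hk [g' [Hg'1 Hg'2 Hg'3] Hg'd]].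
  exists k.
    rewrite inE; apply/hasP; exists g' => //; exact: F2.
  move/mdvdP: Hdvd => /(_ k); rewrite mmulE => H; move: Hk H; slia.
case=> k; rewrite inE => /hasP [g Hg Hgd] Hwk.
exists g => //; apply: (mdvd_trans Hgd); apply/mdvdP => l; rewrite !mmulE ekE.
case: (eqVneq l k) => [->|_] /=; by [rewrite leq_add2r | rewrite leq_addl].
Qed.
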